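(* Let $p$ be an odd prime and $1\le\ell\le p-1$ with Legendre symbol $\left(\frac{8\ell+1}{p}\right)=-1$. Then for all $n,k\ge0$, $$b\!\left(4p^{2k+3}n+\frac{(8\ell+1)p^{2k+2}-1}{2}\right)\equiv 0\pmod 8.$$
   Context: The mock theta function $\mathcal{B}(q)=\sum_{n\ge0}\frac{q^n(-q;q^2)_n}{(q;q^2)_{n+1}}=\sum_{n\ge0}b(n)q^n$, where $(a;q)_n=\prod_{j=0}^{n-1}(1-aq^j)$. *)

(* Defs.v *)
From HB Require Import structures.
From mathcomp Require Import all_boot all_order all_algebra.
Set Implicit Arguments. Unset Strict Implicit. Unset Printing Implicit Defensive.
Import Order.TTheory GRing.Theory Num.Theory.
Local Open Scope ring_scope.

(* Formal power series in q with integer coefficients, as coefficient functions. *)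
Definition ps := nat -> int.

Definition pmul (f g : ps) : ps := fun n => \sum_(i < n.+1) f i * g (n - i)%N.
Definition pone : ps := fun n => ((n == 0)%N)%:R.
Definition pX (k : nat) : ps := fun n => ((n == k)%N)%:R.
(* 1 + q^k  (used for k >= 1) *)
Definition opq (k : nat) : ps := fun n => ((n == 0)%N)%:R + ((n == k)%N)%:R.
(* 1/(1 - q^k) = sum_t q^(k t)  (used for k >= 1) *)
Definition geom (k : nat) : ps := fun n => ((k %| n)%N)%:R.

Definition pprod (s : seq ps) : ps := foldr pmul pone s.

(* (-q;q^2)_m = prod_{j<m} (1 + q^(2j+1)) *)
Definition mq_poch (m : nat) : ps := pprod [seq opq (2 * j).+1 | j <- iota 0 m].
(* 1/(q;q^2)_{m+1} = prod_{j<=m} 1/(1 - q^(2j+1)) *)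
Definition inv_q_poch (m : nat) : ps := pprod [seq geom (2 * j).+1 | j <- iota 0 m.+1].

Definition Bterm (m : nat) : ps := pmul (pX m) (pmul (mq_poch m) (inv_q_poch m)).

(* b(n): coefficient of q^n in B(q); summands with m > n have order >= m > n. *)
Definition b (n : nat) : int := \sum_(m < n.+1) Bterm m n.

Definition legendre (a p : nat) : int :=
  if (p %| a)%N then 0
  else if [exists x : 'I_p, (x ^ 2 == a %[mod p])%N] then 1 else -1.

(* Main.v *)
Require Import Defs.
From HB Require Import structures.
From mathcomp Require Import all_boot all_order all_algebra.
From mathcomp Require Import ring zify.
From Stdlib Require Import Setoid Morphisms.
Import Order.TTheory GRing.Theory Num.Theory.
Local Open Scope ring_scope.

Definition eqK (K : nat) (p q : {poly int}) := forall i, (i < K)%N -> p`_i = q`_i.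

Lemma eqK_refl K : Reflexive (eqK K). Proof. by move=> p i. Qed.
Lemma eqK_sym K : Symmetric (eqK K). Proof. by move=> p q h i /h. Qed.
Lemma eqK_trans K : Transitive (eqK K). Proof. by move=> p q r h1 h2 i hi; rewrite h1 ?h2. Qed.
Add Parametric Relation K : {poly int} (eqK K)
  reflexivity proved by (eqK_refl K) symmetry proved by (eqK_sym K)
  transitivity proved by (eqK_trans K) as eqK_rel.

Add Parametric Morphism K : (@GRing.add {poly int})
  with signature eqK K ==> eqK K ==> eqK K as eqK_add.
Proof. by move=> p p' hp q q' hq i hi; rewrite !coefD hp ?hq. Qed.
Add Parametric Morphism K : (@GRing.opp {poly int})
  with signature eqK K ==> eqK K as eqK_opp.
Proof. by move=> p p' hp i hi; rewrite !coefN hp. Qed.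
Add Parametric Morphism K : (@GRing.mul {poly int})
  with signature eqK K ==> eqK K ==> eqK K as eqK_mul.
Proof.
move=> p p' hp q q' hq i hi; rewrite !coefM; apply: eq_bigr => j _.
have hj : (j < K)%N by apply: leq_ltn_trans hi; rewrite -ltnS.
by rewrite hp // hq //; apply: leq_ltn_trans hi; rewrite leq_subr.
Qed.


Add Parametric Morphism K : (@GRing.exp {poly int})
  with signature eqK K ==> eq ==> eqK K as eqK_exp.
Proof.
move=> p p' hp m; elim: m => [|m IH]; first by rewrite !expr0.
rewrite !exprS => i hi; rewrite !coefM; apply: eq_bigr => j _.
have hj : (j < K)%N by apply: leq_ltn_trans hi; rewrite -ltnS.
rewrite (hp j hj) (IH (i - j)%N) //; apply: leq_ltn_trans hi; by rewrite leq_subr.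
Qed.

Lemma eqKD K p p' q q' : eqK K p p' -> eqK K q q' -> eqK K (p + q) (p' + q').
Proof. by move=> hp hq i hi; rewrite !coefD hp ?hq. Qed.
Lemma eqKN K p p' : eqK K p p' -> eqK K (- p) (- p').
Proof. by move=> hp i hi; rewrite !coefN hp. Qed.
Lemma eqKM K p p' q q' : eqK K p p' -> eqK K q q' -> eqK K (p * q) (p' * q').
Proof. by move=> hp hq; rewrite hp hq. Qed.

Lemma eqK_Xn K m p : (K <= m)%N -> eqK K ('X^m * p) 0.
Proof.
move=> hm i hi; rewrite coefXnM coef0.
by have -> : (i < m)%N by apply: leq_trans hm.
Qed.

Lemma geom_id (R : comPzRingType) (y : R) K :
  (1 - y) * \sum_(t < K) y ^+ t = 1 - y ^+ K.
Proof.
elim: K => [|K IH]; first by rewrite big_ord0 expr0 mulr0 subrr.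
by rewrite big_ord_recr /= mulrDr IH exprS; ring.
Qed.

Lemma D_id (R : comPzRingType) (y : R) K :
  (1 - y) ^+ 2 * \sum_(c < K) c%:R * y ^+ c
  = y - K%:R * y ^+ K + (K%:R - 1) * y ^+ K.+1.
Proof.
elim: K => [|K IH]; first by rewrite big_ord0 mulr0 expr0 expr1; ring.
rewrite big_ord_recr /= mulrDr IH !exprS -natr1; ring.
Qed.

Definition J (K k : nat) : {poly int} := \sum_(t < K) 'X^(k * t).
Definition D (K k : nat) : {poly int} := \sum_(c < K) c%:R * 'X^(k * c).

Lemma JE K k : J K k = \sum_(t < K) ('X^k) ^+ t.
Proof. by apply: eq_bigr => t _; rewrite exprM. Qed.
Lemma DE K k : D K k = \sum_(c < K) c%:R * ('X^k) ^+ c.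
Proof. by apply: eq_bigr => t _; rewrite exprM. Qed.

Lemma eqK_pow K k (m : nat) p : (0 < k)%N -> eqK K (('X^k) ^+ K * p) 0.
Proof.
move=> hk; rewrite -exprM; apply: eqK_Xn.
by rewrite -{1}(mul1n K) leq_mul2r hk orbT.
Qed.

Lemma JK K k : (0 < k)%N -> eqK K ((1 - 'X^k) * J K k) 1.
Proof.
move=> hk; rewrite JE geom_id.
have h := eqK_pow K k 0 1 hk; rewrite mulr1 in h.
by rewrite h subr0.
Qed.

Lemma DK K k : (0 < k)%N -> eqK K ((1 - 'X^k) ^+ 2 * D K k) 'X^k.
Proof.
move=> hk; rewrite DE D_id.
set y := 'X^k.
have -> : y - K%:R * y ^+ K + (K%:R - 1) * y ^+ K.+1
  = y + y ^+ K * (- K%:R + (K%:R - 1) * y) by rewrite exprS; ring.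
by rewrite (eqK_pow K k 0 _ hk) addr0.
Qed.

Lemma eqK_of_eq K p q : p = q -> eqK K p q.
Proof. by move=> ->. Qed.

Lemma eqK_sum K I (r : seq I) (P : pred I) (F G : I -> {poly int}) :
  (forall i, P i -> eqK K (F i) (G i)) ->
  eqK K (\sum_(i <- r | P i) F i) (\sum_(i <- r | P i) G i).
Proof.
move=> h i hi; rewrite !coef_sum; apply: eq_bigr => j Pj; exact: h.
Qed.

Lemma telesc (V : zmodType) (f : nat -> V) K :
  \sum_(k < K) (f k - f k.+1) = f 0%N - f K.
Proof.
elim: K => [|K IH]; first by rewrite big_ord0 subrr.
by rewrite big_ord_recr /= IH addrA subrK.
Qed.

Definition x (n : nat) : {poly int} := 'X^((2 * n).+1).
Definition Jx K n := J K (2 * n).+1.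
Definition g K n k :=
  x n ^+ k * (\prod_(j < k) (1 + x (n + j))) * \prod_(j < k.+1) Jx K (n + j).
Definition S K n := \sum_(k < K) g K n k.

Lemma xD n k : x (n + k) = x n * ('X^2) ^+ k.
Proof. by rewrite /x -exprM -exprD; congr (_ ^+ _); lia. Qed.

Lemma xS n : x n.+1 = 'X^2 * x n.
Proof. by rewrite -addn1 xD expr1 mulrC. Qed.

Lemma JxK K n : eqK K ((1 - x n) * Jx K n) 1.
Proof. exact: JK. Qed.

Lemma gS K n k :
  g K n k.+1 = g K n k * x n * (1 + x (n + k)) * Jx K (n + k.+1).
Proof.
rewrite /g big_ord_recr /= [X in _ * X = _]big_ord_recr /= exprS.
ring.
Qed.

Lemma bump_shift (F : nat -> {poly int}) m n :
  \prod_(i < m) F (n + bump 0 i)%N = \prod_(i < m) F (n.+1 + i)%N.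
Proof. by apply: eq_bigr => i _; rewrite /bump add1n addSnnS. Qed.

Lemma gSl K n k :
  ('X^2) ^+ k * g K n k.+1 = x n * (1 + x n) * Jx K n * g K n.+1 k.
Proof.
rewrite /g big_ord_recl [X in _ = _ * X]/= big_ord_recl /= addn0.
rewrite (bump_shift (fun j => 1 + x j)) (bump_shift (Jx K)).
rewrite xS [('X^2 * x n) ^+ k]exprMn [x n ^+ k.+1]exprS; ring.
Qed.

Lemma eqK_xK K n : eqK K (x n ^+ K) 0.
Proof. by have := eqK_pow K (2 * n).+1 0 1 isT; rewrite mulr1. Qed.

Lemma g0 K n : g K n 0 = Jx K n.
Proof. by rewrite /g expr0 big_ord0 big_ord1 addn0 !mul1r. Qed.

Lemma step K n :
  eqK K ((1 - x n) ^+ 2 * S K n)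
        (1 + x n ^+ 2 + 'X^2 * x n ^+ 2 * (1 + x n) ^+ 2 * S K n.+1).
Proof.
pose a k := (1 - x n ^+ 2) * x n * ('X^2) ^+ k * g K n k.
pose u k := (1 - x n) * g K n k * (1 - x n * ('X^2) ^+ k).
have C1 : forall k, eqK K (u k - u k.+1) ((1 - x n) ^+ 2 * g K n k - a k).
  move=> k; rewrite /u gS.
  have e : (1 - x n) * (g K n k * x n * (1 + x (n + k)) * Jx K (n + k.+1))
              * (1 - x n * ('X^2) ^+ k.+1)
         = (1 - x n) * g K n k * x n * (1 + x (n + k))
              * ((1 - x (n + k.+1)) * Jx K (n + k.+1)) by rewrite !xD; ring.
  rewrite e JxK mulr1 xD; apply: eqK_of_eq; rewrite /a; ring.
have C2 : forall k, eqK K ('X^2 * x n ^+ 2 * (1 + x n) ^+ 2 * g K n.+1 k) (a k.+1).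
  move=> k.
  have e : a k.+1 = 'X^2 * x n ^+ 2 * (1 + x n) ^+ 2 * g K n.+1 k
                     * ((1 - x n) * Jx K n).
    have -> : a k.+1 = (1 - x n ^+ 2) * x n * 'X^2 * (('X^2) ^+ k * g K n k.+1).
      by rewrite /a [('X^2) ^+ k.+1]exprS; ring.
    by rewrite gSl; ring.
  by rewrite e JxK mulr1.
rewrite /S.
have E1 : eqK K ('X^2 * x n ^+ 2 * (1 + x n) ^+ 2 * \sum_(k < K) g K n.+1 k)
              (\sum_(k < K) a k.+1).
  by rewrite mulr_sumr; apply: eqK_sum => k _; exact: C2.
have E2 : \sum_(k < K) a k.+1 = \sum_(k < K) a k - a 0%N + a K.
  have := telesc _ a K; rewrite sumrB => h.
  have h' : a 0%N = a K + (\sum_(k < K) a k - \sum_(k < K) a k.+1)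
    by rewrite h; ring.
  rewrite h'; ring.
have E3 : (1 - x n) ^+ 2 * \sum_(k < K) g K n k
   = \sum_(k < K) ((1 - x n) ^+ 2 * g K n k - a k) + \sum_(k < K) a k.
  by rewrite sumrB subrK mulr_sumr.
have E4 : eqK K (\sum_(k < K) ((1 - x n) ^+ 2 * g K n k - a k)) (u 0%N - u K).
  rewrite -(telesc _ u); apply: eqK_sum => k _; apply: eqK_sym; exact: C1.
rewrite E1 E2 E3 E4.
have U0 : eqK K (u 0%N) (1 - x n).
  have -> : u 0%N = (1 - x n) * ((1 - x n) * Jx K n) by rewrite /u g0 expr0; ring.
  by rewrite JxK mulr1.
have A0 : eqK K (a 0%N) (x n * (1 + x n)).
  have -> : a 0%N = x n * (1 + x n) * ((1 - x n) * Jx K n)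
    by rewrite /a g0 expr0; ring.
  by rewrite JxK mulr1.
have UK : eqK K (u K) 0.
  by rewrite /u /g eqK_xK !(mul0r, mulr0); reflexivity.
have AK : eqK K (a K) 0.
  by rewrite /a /g /= (eqK_xK K n) !(mul0r, mulr0); reflexivity.
apply: (eqK_trans K _ (1 - x n - 0 + \sum_(k < K) a k)).
  by apply: eqKD; [apply: eqKD; [exact: U0 | apply: eqKN; exact: UK] | reflexivity].
apply: (eqK_trans K _ (1 + x n ^+ 2 + (\sum_(k < K) a k - x n * (1 + x n) + 0))).
  by apply: eqK_of_eq; ring.
apply: eqKD; first reflexivity.
apply: eqKD; last exact: (eqK_sym K _ _ AK).
by apply: eqKD; [reflexivity | apply: eqKN; exact: (eqK_sym K _ _ A0)].
Qed.

Definition A K n := Jx K n ^+ 2 * (1 + x n ^+ 2).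
Definition c K n := Jx K n ^+ 2 * ('X^2 * x n ^+ 2 * (1 + x n) ^+ 2).
Definition W K n := \prod_(j < n) c K j.

Lemma JxK2 K n : eqK K (Jx K n ^+ 2 * (1 - x n) ^+ 2) 1.
Proof. by rewrite -exprMn [X in X ^+ 2]mulrC (JxK K n) expr1n. Qed.

Lemma stepS K n : eqK K (S K n) (A K n + c K n * S K n.+1).
Proof.
apply: (eqK_trans K _ (Jx K n ^+ 2 * ((1 - x n) ^+ 2 * S K n))).
  by apply: (eqK_sym K); rewrite mulrA (JxK2 K n) mul1r; reflexivity.
rewrite (step K n); apply: eqK_of_eq; rewrite /A /c; ring.
Qed.

Lemma iter K L :
  eqK K (S K 0) (\sum_(n < L) W K n * A K n + W K L * S K L).
Proof.
elim: L => [|L IH]; first by rewrite big_ord0 /W big_ord0 add0r mul1r.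
rewrite (eqK_trans K _ _ _ IH) //.
rewrite stepS big_ord_recr /= /W big_ord_recr /=.
by apply: eqK_of_eq; ring.
Qed.

Lemma W_high K p : eqK K (W K K * p) 0.
Proof.
have -> : W K K = 'X^(2 * K) * \prod_(j < K) (Jx K j ^+ 2 * (x j ^+ 2 * (1 + x j) ^+ 2)).
  rewrite /W exprM -[in X in X * _](card_ord K) -prodr_const -big_split /=.
  by apply: eq_bigr => j _; rewrite /c; ring.
by rewrite -mulrA; apply: eqK_Xn; rewrite leq_pmull.
Qed.

Lemma S0_sum K : eqK K (S K 0) (\sum_(n < K) W K n * A K n).
Proof. by rewrite (iter K K) W_high addr0. Qed.

Definition Ds K n := D K (2 * n).+1.

Lemma eqKMn K p q m : eqK K p q -> eqK K (p *+ m) (q *+ m).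
Proof. by move=> h i hi; rewrite !coefMn h. Qed.

Lemma sD K n : eqK K (x n * Jx K n ^+ 2) (Ds K n).
Proof.
apply: (eqK_trans K _ (Jx K n ^+ 2 * ((1 - x n) ^+ 2 * Ds K n))).
  apply: (eqK_trans K _ (Jx K n ^+ 2 * x n)); first by apply: eqK_of_eq; rewrite mulrC.
  apply: eqKM; first reflexivity.
  apply: (eqK_sym K); exact: (DK K (2 * n).+1 isT).
apply: (eqK_trans K _ (1 * Ds K n)); last by rewrite mul1r; reflexivity.
rewrite mulrA; apply: eqKM; [exact: JxK2 | reflexivity].
Qed.

Lemma cE K n : eqK K (c K n) ('X^2 * x n ^+ 2 * (1 + Ds K n *+ 4)).
Proof.
have -> : c K n = 'X^2 * x n ^+ 2 * (Jx K n ^+ 2 * (1 - x n) ^+ 2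
                  + (x n * Jx K n ^+ 2) *+ 4) by rewrite /c; ring.
apply: eqKM; first reflexivity.
apply: eqKD; [exact: JxK2 | apply: eqKMn; exact: sD].
Qed.

Lemma AE K n : eqK K (A K n) (1 + Ds K n *+ 2).
Proof.
have -> : A K n = Jx K n ^+ 2 * (1 - x n) ^+ 2 + (x n * Jx K n ^+ 2) *+ 2
  by rewrite /A; ring.
apply: eqKD; [exact: JxK2 | apply: eqKMn; exact: sD].
Qed.

Lemma WE K n :
  eqK K (W K n) ('X^(2 * n * n.+1) * \prod_(j < n) (1 + Ds K j *+ 4)).
Proof.
elim: n => [|n IH]; first by rewrite /W !big_ord0 mulr1 muln0 expr0; reflexivity.
rewrite /W big_ord_recr /= -/(W K n).
apply: (eqK_trans K _ _ _ (eqKM _ _ _ _ _ IH (cE K n))).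
rewrite big_ord_recr /=; apply: eqK_of_eq.
have -> : 'X^(2 * n.+1 * n.+2) = 'X^(2 * n * n.+1) * 'X^2 * x n ^+ 2 :> {poly int}.
  by rewrite /x -exprM -!exprD; congr (_ ^+ _); lia.
ring.
Qed.

Lemma D_coef K k i : (D K k)`_i = \sum_(c < K) ((i == k * c)%N)%:R *+ c.
Proof.
rewrite /D coef_sum; apply: eq_bigr => c _.
by rewrite mulr_natl coefMn coefXn.
Qed.

Lemma Ds_ev K n i : ~~ odd i -> (2 %| (Ds K n)`_i)%Z.
Proof.
move=> hi; rewrite D_coef; apply: rpred_sum => c _.
case: eqP => [eic | _]; last by rewrite mul0rn dvdz0.
rewrite mulr1n natz dvdzE /=; move: hi; rewrite eic oddM /= => hc.
by rewrite dvdn2 natz absz_nat; move: hc; rewrite mul2n odd_double.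
Qed.

Lemma Ds_4 K n i : (4 %| i)%N -> (4 %| (Ds K n)`_i)%Z.
Proof.
move=> hi; rewrite D_coef; apply: rpred_sum => c _.
case: eqP => [eic | _]; last by rewrite mul0rn dvdz0.
have h4 : coprime 4 (2 * n).+1.
  by rewrite (_ : 4 = 2 ^ 2)%N // coprime_pexpl // coprime2n /= mul2n odd_double.
by rewrite mulr1n dvdzE !natz !absz_nat /=; move: hi; rewrite eic mulnC (Gauss_dvdl _ h4).
Qed.

Lemma dvd_mn (y : int) (d m : nat) : (d %| m)%N -> (d%:Z %| y *+ m)%Z.
Proof. by move=> h; rewrite -mulr_natr natz; apply: dvdz_mull; rewrite dvdzE. Qed.

Lemma Pform K n : exists T : {poly int},
  \prod_(j < n) (1 + Ds K j *+ 4) = 1 + T *+ 4 /\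
  (forall i, ~~ odd i -> (2 %| T`_i)%Z).
Proof.
elim: n => [|n [T [ET HT]]].
  by exists 0; rewrite big_ord0 mul0rn addr0; split=> // i _; rewrite coef0 dvdz0.
exists (T + Ds K n + (T * Ds K n) *+ 4); split.
  by rewrite big_ord_recr /= ET; ring.
move=> i hi; rewrite coefD coefMn coefD.
apply: rpredD; first by apply: rpredD; [exact: HT | exact: Ds_ev].
by apply: dvd_mn.
Qed.

Lemma lem8 (a b : int) : (4 %| a)%Z -> (2 %| b)%Z -> (8 %| a *+ 2 + b *+ 4)%Z.
Proof.
move=> /dvdzP[k ->] /dvdzP[l ->]; apply/dvdzP; exists (k + l); ring.
Qed.

Lemma Tcoef K n e : (e < K)%N -> (4 %| e)%N ->
  (8 %| (W K n * A K n)`_e - ((e == 2 * n * n.+1)%N)%:R)%Z.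
Proof.
move=> he h4.
have [T [ET HT]] := Pform K n.
have -> : (W K n * A K n)`_e =
   ('X^(2 * n * n.+1) * ((1 + T *+ 4) * (1 + Ds K n *+ 2)))`_e.
  by rewrite (eqKM _ _ _ _ _ (WE K n) (AE K n) e he) ET mulrA.
rewrite coefXnM; case: ltnP => hm.
  by rewrite (ltn_eqF hm) subrr dvdz0.
have -> : (1 + T *+ 4) * (1 + Ds K n *+ 2) =
          1 + Ds K n *+ 2 + (T + (T * Ds K n) *+ 2) *+ 4 by ring.
have hm4 : (4 %| 2 * n * n.+1)%N.
  rewrite -mulnA (_ : 4 = 2 * 2)%N // dvdn_pmul2l // dvdn2 oddM oddS.
  by case: (odd n).
have he4 : (4 %| e - 2 * n * n.+1)%N by rewrite dvdn_sub.
rewrite coefD coefMn coefD coefMn coefD coef1 coefMn.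
have -> : ((e - 2 * n * n.+1)%N == 0%N) = (e == 2 * n * n.+1)%N.
  by rewrite subn_eq0 eqn_leq hm andbT.
rewrite (_ : forall b0 u v : int, b0 + u + v - b0 = u + v); last by move=> *; ring.
apply: lem8; first exact: Ds_4.
apply: rpredD.
  by apply: HT; rewrite -dvdn2; apply: dvdn_trans he4.
by apply: dvd_mn.
Qed.

Definition rep K (f : ps) (p : {poly int}) := forall i, (i < K)%N -> f i = p`_i.

Lemma rep_mul K f g p q : rep K f p -> rep K g q -> rep K (pmul f g) (p * q).
Proof.
move=> hf hg i hi; rewrite /pmul coefM; apply: eq_bigr => j _.
have hj : (j < K)%N by apply: leq_ltn_trans hi; rewrite -ltnS.
by rewrite hf // hg //; apply: leq_ltn_trans hi; rewrite leq_subr.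
Qed.

Lemma rep_one K : rep K pone 1.
Proof. by move=> i _; rewrite coef1. Qed.

Lemma rep_X K k : rep K (pX k) 'X^k.
Proof. by move=> i _; rewrite coefXn. Qed.

Lemma rep_opq K k : rep K (opq k) (1 + 'X^k).
Proof. by move=> i _; rewrite coefD coef1 coefXn. Qed.

Lemma rep_geom K k : (0 < k)%N -> rep K (geom k) (J K k).
Proof.
move=> hk i hi; rewrite /geom /J coef_sum.
under eq_bigr do rewrite coefXn.
case: (boolP (k %| i)%N) => hd.
  have ht : (i %/ k < K)%N by apply: leq_ltn_trans hi; rewrite leq_div.
  rewrite (bigD1 (Ordinal ht)) //= mulnC divnK // eqxx big1 ?addr0 // => t ht0.
  case: eqP => // eit; case/eqP: ht0; apply: val_inj => /=.
  by rewrite eit mulKn.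
rewrite big1 // => t _; case: eqP => // eit.
by case/negP: hd; rewrite eit dvdn_mulr.
Qed.

Lemma rep_pprod K (s : seq nat) (F : nat -> ps) (P : nat -> {poly int}) :
  (forall j, rep K (F j) (P j)) ->
  rep K (pprod [seq F j | j <- s]) (\prod_(j <- s) P j).
Proof.
move=> h; elim: s => [|a s IH]; first by rewrite big_nil; exact: rep_one.
by rewrite big_cons /=; apply: rep_mul.
Qed.

Lemma iota_ord (F : nat -> {poly int}) m :
  \prod_(j <- iota 0 m) F j = \prod_(j < m) F j.
Proof. by rewrite -(big_mkord xpredT) /index_iota subn0. Qed.

Lemma rep_Bterm K m : rep K (Bterm m) (g K 0 m).
Proof.
have -> : g K 0 m = 'X^m * ((\prod_(j <- iota 0 m) (1 + 'X^((2 * j).+1)))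
            * \prod_(j <- iota 0 m.+1) J K (2 * j).+1).
  by rewrite !iota_ord /g /x muln0 expr1 -mulrA.
apply: rep_mul; first exact: rep_X.
apply: rep_mul; apply: rep_pprod => j; first exact: rep_opq.
exact: rep_geom.
Qed.

Lemma b_S e : b e = (S e.+1 0)`_e.
Proof.
rewrite /b /S coef_sum; apply: eq_bigr => m _; exact: rep_Bterm.
Qed.

Lemma main_b e : (4 %| e)%N -> (forall n, e != 2 * n * n.+1)%N -> (8 %| b e)%Z.
Proof.
move=> h4 hn; rewrite b_S (S0_sum e.+1 e (ltnSn e)) coef_sum.
apply: rpred_sum => n _.
have := Tcoef e.+1 n e (ltnSn e) h4.
by rewrite (negbTE (hn n)) subr0.
Qed.

Lemma arith (p l n k : nat) : prime p -> odd p ->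
  legendre (8 * l + 1) p = -1 ->
  let e := (4 * p ^ (2 * k + 3) * n + ((8 * l + 1) * p ^ (2 * k + 2) - 1) %/ 2)%N in
  (4 %| e)%N /\ (forall m, e != 2 * m * m.+1)%N.
Proof.
move=> pp op hleg e.
set P := (p ^ k.+1)%N.
have hP2 : (p ^ (2 * k + 2) = P * P)%N by rewrite /P -expnD; congr (p ^ _)%N; lia.
have hP3 : (p ^ (2 * k + 3) = p * (P * P))%N by rewrite /P -expnD -expnS; congr (p ^ _)%N; lia.
have oP : odd P by rewrite /P oddX op orbT.
have hPt := odd_double_half P; rewrite oP /= in hPt.
set t := P./2 in hPt.
have : (2 %| t * t.+1)%N by rewrite dvdn2 oddM oddS; case: (odd t).
case/dvdnP => u hu.
have hPP : (P * P = 8 * u + 1)%N.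
  rewrite -hPt -!muln2; nia.
set w := (8 * l * u + l + u)%N.
have hw : (((8 * l + 1) * p ^ (2 * k + 2) - 1) %/ 2 = 4 * w)%N.
  rewrite hP2 hPP (_ : ((8 * l + 1) * (8 * u + 1) - 1) = (4 * w) * 2)%N ?mulnK //.
  rewrite /w; lia.
have he : (e = 4 * (p * (P * P) * n + w))%N by rewrite /e hw hP3; lia.
split; first by rewrite he dvdn_mulr.
move=> m; apply/negP => /eqP hm.
set M := (8 * p * n + 8 * l + 1)%N.
have hsq : ((2 * m + 1) ^ 2 = P ^ 2 * M)%N.
  have : (2 * e + 1 = P * P * M)%N by rewrite he /M; rewrite /w in hPP *; nia.
  rewrite hm => h; rewrite !expnS !expn0 !muln1 -h; nia.
have : (P %| 2 * m + 1)%N by rewrite -(@dvdn_pexp2r _ _ 2) // hsq dvdn_mulr.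
case/dvdnP => c hc.
have hcM : (c ^ 2 = M)%N.
  have hP0 : (0 < P ^ 2)%N by rewrite expn_gt0 /P expn_gt0 prime_gt0.
  by apply/eqP; rewrite -(eqn_pmul2l hP0) -hsq hc expnMn mulnC.
move: hleg; rewrite /legendre.
case: ifP => _ //; case: ifP => // /negbT /existsP; case.
have p0 := prime_gt0 pp.
exists (Ordinal (ltn_pmod c p0)) => /=.
rewrite modnXm hcM /M (_ : 8 * p * n + 8 * l + 1 = (8 * n) * p + (8 * l + 1))%N; last lia.
by rewrite modnMDl.
Qed.


Theorem corollary1p8 (p l : nat) :
  prime p -> odd p -> (1 <= l <= p.-1)%N ->
  legendre (8 * l + 1) p = -1 ->
  forall n k : nat,
    (8 %| b (4 * p ^ (2 * k + 3) * n + ((8 * l + 1) * p ^ (2 * k + 2) - 1) %/ 2))%Z.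
Proof.
move=> pp op _ hleg n k.
have [h4 hn] := arith p l n k pp op hleg.
exact: main_b.
Qed.
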